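(* Let $\mathcal{L}:\mathcal{M}_d\to\mathcal{M}_d$ be a unital, reversible Liouvillian with an almost commuting unitary eigenbasis $\{U_i\}_{i\in G}$ associated to a finite abelian group $G$, with $\mathcal{L}(U_i)=\lambda_iU_i$, and let $P_t:V(G)\to V(G)$ be the associated classical semigroup $P_tf=\sum_{i\in G}e^{\lambda_it}\hat f(i)\chi_i$. Then for all $t\geq 0$, $$\|e^{t\mathcal{L}}\|_{2\to4,\frac{\mathbb{1}}{d}}\leq\|P_t\|_{2\to4}.$$
   Context: A Liouvillian generates a semigroup $e^{t\mathcal{L}}$ of completely positive trace-preserving maps; unital: $\mathcal{L}(\mathbb{1})=0$; reversible: $\mathcal{L}=\mathcal{L}^*$ (Hilbert–Schmidt adjoint), so the $\lambda_i$ are real. Almost commuting unitary basis associated to a finite abelian group $G$ with $|G|=d^2$: unitaries $\{U_i\}_{i\in G}\subset\mathcal{M}_d$ with $U_0=\mathbb{1}_d$, $\text{tr}(U_i^\dagger U_j)=d\delta_{ij}$, and for all $i,j$ there are phases $|\phi(i,j)|=|\phi'(i,j)|=1$ with $U_iU_j=\phi(i,j)U_jU_i$ and $U_iU_j=\phi'(i,j)U_{i+j}$. Fix a group isomorphism $i\mapsto\chi_i$ from $G$ to its character group $\hat G$. $V(G)$ is the space of functions $G\to\mathbb{C}$ with $\|f\|_p^p=\frac{1}{|G|}\sum_g|f(g)|^p$, inner product $\langle f,h\rangle=\frac1{|G|}\sum_g\overline{f(g)}h(g)$, $\hat f(i)=\langle\chi_i,f\rangle$, and $\|A\|_{2\to4}=\sup_{f\neq0}\|Af\|_4/\|f\|_2$.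 On $\mathcal{M}_d$: $\|Y\|_{p,\frac{\mathbb{1}}{d}}=d^{-1/p}(\text{tr}|Y|^p)^{1/p}$, $\|S\|_{2\to4,\frac{\mathbb{1}}{d}}=\sup_{X\neq0}\|S(X)\|_{4,\frac{\mathbb{1}}{d}}/\|X\|_{2,\frac{\mathbb{1}}{d}}$. *)

(* Defs.v *)
From HB Require Import structures.
From mathcomp Require Import all_boot all_order all_algebra.
From mathcomp Require Import complex.
From mathcomp Require Import all_classical all_reals all_analysis.

Set Implicit Arguments.
Unset Strict Implicit.
Unset Printing Implicit Defensive.

Import Order.TTheory GRing.Theory Num.Theory.
Import numFieldNormedType.Exports.
Local Open Scope ring_scope.
Local Open Scope classical_set_scope.

Section QuantumDefs.
Variable R : realType.
Local Notation C := R[i].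

Definition hc (m n : nat) (A : 'M[C]_(m, n)) : 'M[C]_(n, m) := (map_mx conjc A)^T.

Variable d : nat.

(* ||Y||_{p,1/d} = d^{-1/p} (tr |Y|^p)^{1/p} for p = 2, 4; |Y|^2 = Y^dag Y, |Y|^4 = (Y^dag Y)^2 *)
Definition nrm2 (X : 'M[C]_d) : R :=
  (d%:R) `^ (- (1 / 2)) * (complex.Re (\tr (hc X *m X))) `^ (1 / 2).
Definition nrm4 (Y : 'M[C]_d) : R :=
  (d%:R) `^ (- (1 / 4)) * (complex.Re (\tr ((hc Y *m Y) *m (hc Y *m Y)))) `^ (1 / 4).

Definition norm24_mx (S : 'M[C]_d -> 'M[C]_d) : \bar R :=
  ereal_sup [set ((nrm4 (S X) / nrm2 X)%:E) | X in [set X : 'M[C]_d | X != 0]].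

Definition expsup (L : 'M[C]_d -> 'M[C]_d) (t : R) (X : 'M[C]_d) : 'M[C]_d :=
  limn (series (fun n => (real_complex R (t ^+ n / (n`!)%:R)) *: iter n L X)).

(* positivity of an element of M_k (x) M_d, written as a k x k block matrix *)
Definition psd_block (k : nat) (A : 'I_k -> 'I_k -> 'M[C]_d) : Prop :=
  forall v : 'I_k -> 'cV[C]_d,
    0 <= \sum_(a < k) \sum_(b < k) (hc (v a) *m A a b *m v b) 0 0.

Definition completely_positive (T : 'M[C]_d -> 'M[C]_d) : Prop :=
  forall (k : nat) (A : 'I_k -> 'I_k -> 'M[C]_d),
    psd_block A -> psd_block (fun a b => T (A a b)).

Definition trace_preserving (T : 'M[C]_d -> 'M[C]_d) : Prop :=
  forall X, \tr (T X) = \tr X.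

Definition liouvillian (L : {linear 'M[C]_d -> 'M[C]_d}) : Prop :=
  forall t : R, 0 <= t ->
    completely_positive (expsup L t) /\ trace_preserving (expsup L t).

Definition unital (L : 'M[C]_d -> 'M[C]_d) : Prop := L 1%:M = 0.

Definition reversible (L : 'M[C]_d -> 'M[C]_d) : Prop :=
  forall A B : 'M[C]_d, \tr (hc A *m L B) = \tr (hc (L A) *m B).

Variable G : finZmodType.

Definition almost_commuting_unitary_basis (U : G -> 'M[C]_d) : Prop :=
  [/\ U 0 = 1%:M,
      forall i, hc (U i) *m U i = 1%:M,
      forall i j, \tr (hc (U i) *m U j) = if i == j then d%:R else 0,
      forall i j, exists ph : C, `|ph| = 1 /\ U i *m U j = ph *: (U j *m U i)
    & forall i j, exists ph : C, `|ph| = 1 /\ U i *m U j = ph *: U (i + j)].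

Definition is_character (f : G -> C) : Prop :=
  f 0 = 1 /\ forall g h, f (g + h) = f g * f h.

Definition character_iso (chi : G -> G -> C) : Prop :=
  [/\ forall i, is_character (chi i),
      forall i j g, chi (i + j) g = chi i g * chi j g,
      injective chi
    & forall f, is_character f -> exists i, chi i = f].

Definition lpG (p : R) (f : G -> C) : R :=
  ((#|G|%:R)^-1 * \sum_(g : G) (complex.Re `|f g|) `^ p) `^ (p^-1).

Definition innerG (f h : G -> C) : C := (#|G|%:R)^-1 * \sum_(g : G) conjc (f g) * h g.

Definition fhat (chi : G -> G -> C) (f : G -> C) (i : G) : C := innerG (chi i) f.

Definition Pt (chi : G -> G -> C) (lam : G -> R) (t : R) (f : G -> C) : G -> C :=
  fun g => \sum_(i : G) real_complex R (expR (lam i * t)) * fhat chi f i * chi i g.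

Definition norm24_fun (A : (G -> C) -> (G -> C)) : \bar R :=
  ereal_sup [set ((lpG 4 (A f) / lpG 2 f)%:E) | f in [set f : G -> C | exists g, f g != 0]].

End QuantumDefs.

(* Main.v *)
Require Import Defs.
From HB Require Import structures.
From mathcomp Require Import all_boot all_order all_algebra.
From mathcomp Require Import complex.
From mathcomp Require Import all_classical all_reals all_analysis.
From mathcomp Require Import fingroup.
From mathcomp Require Import ring lra.
Import Order.TTheory GRing.Theory Num.Theory.
Import numFieldNormedType.Exports.
Local Open Scope ring_scope.
Section Chars.
Variables (R : realType) (G : finZmodType) (chi : G -> G -> R[i]).
Hypothesis Hchi : character_iso chi.

Lemma chiD i g h : chi i (g + h) = chi i g * chi i h.
Proof. by case: Hchi => H _ _ _; case: (H i) => _ ->. Qed.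

Lemma chi_idx i j g : chi (i + j) g = chi i g * chi j g.
Proof. by case: Hchi => _ H _ _; apply: H. Qed.

Lemma chi_g0 i : chi i 0 = 1.
Proof. by case: Hchi => H _ _ _; case: (H i). Qed.

Lemma chi_nz i g : chi i g * chi i (- g) = 1.
Proof. by rewrite -chiD subrr chi_g0. Qed.

Lemma chi_neq0 i g : chi i g != 0.
Proof. by apply/eqP => E; move: (chi_nz i g); rewrite E mul0r => /eqP; rewrite eq_sym oner_eq0. Qed.

Lemma chi0 g : chi 0 g = 1.
Proof.
have := chi_idx 0 0 g; rewrite addr0 => E.
apply: (mulfI (chi_neq0 0 g)); by rewrite mulr1 -E.
Qed.

Lemma chiN i g : chi (- i) g * chi i g = 1.
Proof. by rewrite -chi_idx addNr chi0. Qed.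

Lemma chi_exp i g n : chi i g ^+ n = chi i (g *+ n).
Proof.
elim: n => [|n IH]; first by rewrite expr0 mulr0n chi_g0.
by rewrite exprS IH mulrS chiD.
Qed.

Lemma chi_norm i g : `|chi i g| = 1.
Proof.
have H : chi i g ^+ #|G| = 1.
  rewrite chi_exp -FinRing.zmodXgE.
  have := @cyclic.expg_cardG _ [set: G]%G g (finset.in_setT g).
  by rewrite finset.cardsT => ->; rewrite chi_g0.
have : `|chi i g| ^+ #|G| = 1 by rewrite -normrX H normr1.
have n0 : (0 < #|G|)%N by apply/card_gt0P; exists 0.
move/eqP; rewrite pexpr_eq1 //; by move/eqP.
Qed.

Lemma chi_conj i g : (chi i g)^*%C = chi (- i) g.
Proof.
apply: (mulfI (chi_neq0 i g)).
by rewrite -sqr_normc chi_norm expr1n mulrC chiN.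
Qed.

Lemma chi_sum m : \sum_g chi m g = (m == 0)%:R * #|G|%:R.
Proof.
have [->|m0] := eqVneq m 0.
  by rewrite mul1r (eq_bigr (fun _ => 1)) ?sumr_const // => g _; rewrite chi0.
rewrite mul0r.
have [h Hh] : exists h, chi m h != 1.
  apply: contrapT => Hn.
  have {}Hn : forall g, ~ chi m g != 1 by move=> g Hg; apply: Hn; exists g.
  have : chi m = chi 0.
    apply/funext => g; rewrite chi0; apply/eqP/negPn/negP => /eqP H.
    by apply: (Hn g); apply/eqP.
  case: Hchi => _ _ Hinj _ /Hinj; by move/eqP; rewrite (negbTE m0).
have E : \sum_g chi m g = chi m h * \sum_g chi m g.
  rewrite {1}(reindex_inj (addrI h)) /= mulr_sumr.
  by apply: eq_bigr => g _; rewrite chiD.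
apply/eqP; move/eqP: E; rewrite -subr_eq0 -{1}(mul1r (\sum_g _)) -mulrBl mulf_eq0.
by rewrite subr_eq0 eq_sym (negbTE Hh).
Qed.

End Chars.
Section Fourier.
Variables (R : realType) (G : finZmodType) (chi : G -> G -> R[i]).
Hypothesis Hchi : character_iso chi.
Local Notation n := (#|G|%:R : R[i]).

Lemma n_neq0 : n != 0.
Proof. by rewrite pnatr_eq0 -lt0n; apply/card_gt0P; exists 0. Qed.

Definition FF (c : G -> R[i]) (h : G) := \sum_i c i * chi i h.

Lemma sum_chi_mul (c : G -> R[i]) m :
  \sum_i c i * (i == m)%:R = c m.
Proof.
rewrite (bigD1 m) //= eqxx mulr1 big1 ?addr0 // => i /negbTE ->; by rewrite mulr0.
Qed.

Lemma sum_delta (F : G -> R[i]) m :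
  \sum_i (i == m)%:R * F i = F m.
Proof.
rewrite (bigD1 m) //= eqxx mul1r big1 ?addr0 // => i /negbTE ->; by rewrite mul0r.
Qed.

Lemma fhat_FF c i : fhat chi (FF c) i = c i.
Proof.
rewrite /fhat /innerG /FF.
under eq_bigr => g _ do rewrite chi_conj // mulr_sumr.
rewrite exchange_big /=.
under eq_bigr => j _ do under eq_bigr => g _ do rewrite mulrCA -chi_idx //.
under eq_bigr => j _ do rewrite -mulr_sumr chi_sum // addrC subr_eq0 mulrA.
rewrite -mulr_suml mulrC -mulrA mulfV ?n_neq0 // mulr1.
by rewrite sum_chi_mul.
Qed.

Lemma FF_conj c h : (FF c h)^*%C = \sum_j (c j)^*%C * chi (- j) h.
Proof.
rewrite /FF rmorph_sum; apply: eq_bigr => j _.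
by rewrite rmorphM /= chi_conj.
Qed.

Lemma FF_sq c h : FF c h * (FF c h)^*%C =
  \sum_i \sum_j (c i * (c j)^*%C) * chi (i - j) h.
Proof.
rewrite FF_conj {1}/FF mulr_suml; apply: eq_bigr => i _.
rewrite mulr_sumr; apply: eq_bigr => j _.
by rewrite chi_idx // mulrACA.
Qed.

Lemma P2 c : \sum_h FF c h * (FF c h)^*%C = n * \sum_i c i * (c i)^*%C.
Proof.
under eq_bigr => h _ do rewrite FF_sq.
rewrite exchange_big /= mulr_sumr; apply: eq_bigr => i _.
rewrite exchange_big /=.
under eq_bigr => j _ do rewrite -mulr_sumr chi_sum // subr_eq0.
under eq_bigr => j _ do rewrite mulrCA eq_sym.
by rewrite sum_delta mulrC.
Qed.

Lemma P4 c : \sum_h (FF c h * (FF c h)^*%C) ^+ 2 =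
  n * \sum_i \sum_j \sum_k \sum_l
     (i - j + (k - l) == 0)%:R * (c i * (c j)^*%C * (c k * (c l)^*%C)).
Proof.
under eq_bigr => h _ do rewrite expr2 FF_sq mulr_suml.
rewrite exchange_big /= mulr_sumr; apply: eq_bigr => i _.
under eq_bigr => h _ do rewrite mulr_suml.
rewrite exchange_big /= mulr_sumr; apply: eq_bigr => j _.
under eq_bigr => h _ do rewrite mulr_sumr.
rewrite exchange_big /= mulr_sumr; apply: eq_bigr => k _.
under eq_bigr => h _ do rewrite mulr_sumr.
rewrite exchange_big /= mulr_sumr; apply: eq_bigr => l _.
under eq_bigr => h _ do rewrite mulrACA -chi_idx //.
by rewrite -mulr_sumr chi_sum // mulrC -!mulrA mulrCA.
Qed.

End Fourier.
Section HC.
Variables (R : realType).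
Local Notation C := R[i].

Lemma hcE m n (A : 'M[C]_(m, n)) i j : hc A i j = (A j i)^*%C.
Proof. by rewrite /hc !mxE. Qed.

Lemma hcK m n (A : 'M[C]_(m, n)) : hc (hc A) = A.
Proof. by apply/matrixP => i j; rewrite !hcE conjcK. Qed.

Lemma hcM m n p (A : 'M[C]_(m, n)) (B : 'M[C]_(n, p)) : hc (A *m B) = hc B *m hc A.
Proof.
apply/matrixP => i j; rewrite hcE !mxE rmorph_sum; apply: eq_bigr => k _.
by rewrite rmorphM /= !hcE mulrC.
Qed.

Lemma hcD m n (A B : 'M[C]_(m, n)) : hc (A + B) = hc A + hc B.
Proof. by apply/matrixP => i j; rewrite !mxE rmorphD. Qed.

Lemma hc0 m n : hc (0 : 'M[C]_(m, n)) = 0.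
Proof. by apply/matrixP => i j; rewrite !mxE conjc0. Qed.

Lemma hc_sum m n (I : finType) (F : I -> 'M[C]_(m, n)) :
  hc (\sum_i F i) = \sum_i hc (F i).
Proof.
apply: (big_ind2 (fun a b => hc a = b)); first exact: hc0.
  by move=> a b c e <- <-; rewrite hcD.
by [].
Qed.

Lemma hcZ m n a (A : 'M[C]_(m, n)) : hc (a *: A) = a^*%C *: hc A.
Proof. by apply/matrixP => i j; rewrite !mxE rmorphM. Qed.

Lemma hc1 n : hc (1%:M : 'M[C]_n) = 1%:M.
Proof.
apply/matrixP => i j; rewrite hcE !mxE eq_sym.
by rewrite conjc_nat.
Qed.

Lemma tr_hc_ge0 n (B : 'M[C]_n) : 0 <= \tr (hc B *m B).
Proof.
rewrite /mxtrace; apply: sumr_ge0 => i _; rewrite mxE; apply: sumr_ge0 => j _.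
rewrite !mxE mulrC. exact: mulcJ_ge0.
Qed.

Lemma tr_sum n (I : finType) (F : I -> 'M[C]_n) :
  \tr (\sum_i F i) = \sum_i \tr (F i).
Proof. exact: raddf_sum. Qed.

Lemma Re_ge0 (z : C) : 0 <= z -> 0 <= complex.Re z.
Proof. by rewrite lecE => /andP [_ H]. Qed.

End HC.

Section Unitary.
Variables (R : realType) (d : nat) (G : finZmodType) (U : G -> 'M[R[i]]_d).
Hypothesis HU : almost_commuting_unitary_basis U.
Local Notation C := R[i].

Definition PU (M : 'M[C]_d) (a : G) := exists ph : C, `|ph| = 1 /\ M = ph *: U a.

Lemma PU_U j : PU (U j) j.
Proof. by exists 1; rewrite normr1 scale1r. Qed.

Lemma PU_mul M N a b : PU M a -> PU N b -> PU (M *m N) (a + b).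
Proof.
case: HU => _ _ _ _ H5 [p [Hp ->]] [q [Hq ->]].
case: (H5 a b) => r [Hr E].
exists (p * q * r); split; first by rewrite !normrM Hp Hq Hr !mulr1.
by rewrite -scalemxAl -scalemxAr E !scalerA.
Qed.

Lemma UUh i : U i *m hc (U i) = 1%:M.
Proof. by case: HU => _ H2 _ _ _; apply: mulmx1C; apply: H2. Qed.

Lemma PU_hc i : PU (hc (U i)) (- i).
Proof.
case: HU => H1 _ _ _ H5.
case: (H5 (- i) i) => r [Hr E]; rewrite addNr H1 in E.
have r0 : r != 0 by rewrite -normr_eq0 Hr oner_eq0.
exists r^-1; split; first by rewrite normfV Hr invr1.
have : U (- i) *m U i *m hc (U i) = r *: hc (U i).
  by rewrite E -scalemxAl mul1mx.
rewrite -mulmxA UUh mulmx1 => ->.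
by rewrite scalerA mulVf // scale1r.
Qed.

Lemma tr_U a : \tr (U a) = (a == 0)%:R * d%:R.
Proof.
case: HU => H1 _ H3 _ _.
have := H3 0 a; rewrite H1 hc1 mul1mx => ->.
by rewrite eq_sym; case: (a == 0); rewrite ?mul1r ?mul0r.
Qed.

Lemma PU_tr M a : PU M a -> `|\tr M| = (a == 0)%:R * d%:R.
Proof.
case=> p [Hp ->]; rewrite mxtraceZ normrM Hp mul1r tr_U normrM.
by rewrite !ger0_norm ?ler0n.
Qed.

Lemma tr_hcUU i j : \tr (hc (U i) *m U j) = (i == j)%:R * d%:R.
Proof.
case: HU => _ _ H3 _ _; rewrite H3.
by case: (i == j); rewrite ?mul1r ?mul0r.
Qed.

Lemma tr2 (x : G -> C) :
  \tr (hc (\sum_i x i *: U i) *m (\sum_i x i *: U i)) =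
  d%:R * \sum_i (x i)^*%C * x i.
Proof.
rewrite hc_sum mulmx_suml tr_sum mulr_sumr; apply: eq_bigr => i _.
rewrite mulmx_sumr tr_sum.
under eq_bigr => j _ do rewrite hcZ -scalemxAl -scalemxAr scalerA mxtraceZ tr_hcUU.
rewrite (bigD1 i) //= eqxx big1 ?addr0; first by rewrite mul1r mulrC.
by move=> j /negbTE; rewrite eq_sym => ->; rewrite mul0r mulr0.
Qed.

Lemma tr4 (y : G -> C) (Y := \sum_i y i *: U i) :
  `|\tr ((hc Y *m Y) *m (hc Y *m Y))| <=
  d%:R * \sum_i \sum_j \sum_k \sum_l
    (- i + j + (- k + l) == 0)%:R * (`|y i| * `|y j| * (`|y k| * `|y l|)).
Proof.
have E : hc Y *m Y = \sum_i \sum_j ((y i)^*%C * y j) *: (hc (U i) *m U j).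
  rewrite /Y hc_sum mulmx_suml; apply: eq_bigr => i _.
  rewrite mulmx_sumr; apply: eq_bigr => j _.
  by rewrite hcZ -scalemxAl -scalemxAr scalerA.
have E2 : hc Y *m Y *m (hc Y *m Y) = \sum_i \sum_j \sum_k \sum_l
    ((y i)^*%C * y j * ((y k)^*%C * y l)) *: (hc (U i) *m U j *m (hc (U k) *m U l)).
  rewrite E mulmx_suml; apply: eq_bigr => i _.
  rewrite mulmx_suml; apply: eq_bigr => j _.
  rewrite mulmx_sumr; apply: eq_bigr => k _.
  rewrite mulmx_sumr; apply: eq_bigr => l _.
  by rewrite -scalemxAl -scalemxAr scalerA.
rewrite E2 tr_sum mulr_sumr.
apply: le_trans (ler_norm_sum _ _ _) _; apply: ler_sum => i _.
rewrite tr_sum mulr_sumr.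
apply: le_trans (ler_norm_sum _ _ _) _; apply: ler_sum => j _.
rewrite tr_sum mulr_sumr.
apply: le_trans (ler_norm_sum _ _ _) _; apply: ler_sum => k _.
rewrite tr_sum mulr_sumr.
apply: le_trans (ler_norm_sum _ _ _) _; apply: ler_sum => l _.
rewrite mxtraceZ normrM.
have HP : PU (hc (U i) *m U j *m (hc (U k) *m U l)) (- i + j + (- k + l)).
  by apply: PU_mul; apply: PU_mul; (apply: PU_hc || apply: PU_U).
rewrite (PU_tr _ _ HP) !normrM !normcJ.
rewrite le_eqVlt; apply/orP; left; apply/eqP.
by rewrite mulrC [_ * d%:R]mulrC -mulrA.
Qed.

End Unitary.
Section Complete.
Variables (R : realType) (d : nat) (G : finZmodType) (U : G -> 'M[R[i]]_d).
Hypothesis HU : almost_commuting_unitary_basis U.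
Hypothesis HG : #|G| = (d ^ 2)%N.
Local Notation C := R[i].

Lemma sum_mxvec (F : 'I_(d * d) -> C) :
  \sum_c F c = \sum_r \sum_s F (mxvec_index r s).
Proof.
rewrite pair_big /= (reindex (uncurry (@mxvec_index d d))) /=; last first.
  exact: curry_mxvec_bij.
by apply: eq_bigr => -[r s].
Qed.

Lemma d_gt0 : (0 < d)%N.
Proof.
rewrite lt0n; apply/eqP => d0; move: HG; rewrite d0 => H.
have : (0 < #|G|)%N by apply/card_gt0P; exists 0.
by rewrite H.

Qed.

Lemma complete (X : 'M[C]_d) : exists x : G -> C, X = \sum_i x i *: U i.
Proof.
pose W : 'M[C]_(#|G|, d * d) := \matrix_k mxvec (U (enum_val k)).
have dn0 : (d%:R : C) != 0 by rewrite pnatr_eq0 -lt0n d_gt0.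
have HW : W *m hc W = (d%:R : C)%:M.
  apply/matrixP => k j; rewrite !mxE sum_mxvec.
  have := @tr_hcUU R d G U HU (enum_val j) (enum_val k).
  rewrite (inj_eq enum_val_inj) eq_sym mulrC mulr_natr => <-.
  rewrite /mxtrace exchange_big; apply: eq_bigr => r _; rewrite mxE.
  apply: eq_bigr => s _; rewrite !mxE !mxvecE mulrC.
  done.
have rf : row_free W.
  apply/row_freeP; exists (d%:R^-1 *: hc W).
  by rewrite -scalemxAr HW scale_scalar_mx mulVf.
have full : row_full W.
  have rk : \rank W = #|G| by apply/eqP.
  by rewrite /row_full rk HG expnS expn1.
have /submxP [D HD] := submx_full (mxvec X) full.
exists (fun g => D 0 (enum_rank g)).
rewrite -[X]mxvecK HD mulmx_sum_row linear_sum.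
rewrite (reindex (enum_val : 'I_#|G| -> G)) /=; last by apply: onW_bij; exact: enum_val_bij.
apply: eq_bigr => k _; rewrite enum_valK rowK linearZ /= mxvecK.
done.
Qed.

End Complete.
Definition Cn (R : realType) : numFieldType := R[i].

Section Exp.
Variables (R : realType) (d : nat) (G : finZmodType) (U : G -> 'M[R[i]]_d).
Variables (L : {linear 'M[R[i]]_d -> 'M[R[i]]_d}) (lam : G -> R).
Hypothesis HL : forall i, L (U i) = real_complex R (lam i) *: U i.
Local Notation C := R[i].
Local Open Scope classical_set_scope.
Local Open Scope complex_scope.

Lemma cvg_rc (u : nat -> R) (l : R) :
  (u n @[n --> \oo] --> l) -> ((u n)%:C : Cn R) @[n --> \oo] --> (l%:C : Cn R).
Proof.
move=> /cvgrPdist_lt H; apply/cvgrPdist_lt => e e0.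
have : 0 < complex.Re e /\ complex.Im e = 0.
  by move: e0; rewrite ltcE => /andP [/eqP -> ->].
case=> e1 e2.
near=> n.
have : `|l - u n| < complex.Re e by near: n; exact: H.
rewrite -rmorphB /= normc_def /= expr0n /= addr0 sqrtr_sqr => h.
by rewrite ltcE /= e2 eqxx h.
Unshelve. all: by end_near. Qed.

Lemma iterL (x : G -> C) n :
  iter n L (\sum_i x i *: U i) = \sum_i (x i * (lam i)%:C ^+ n) *: U i.
Proof.
elim: n => [|n IH]; first by apply: eq_bigr => i _; rewrite expr0 mulr1.
rewrite iterS IH linear_sum; apply: eq_bigr => i _.
by rewrite linearZ /= HL scalerA exprSr mulrA.
Qed.

Lemma expsupE (x : G -> C) t :
  expsup L t (\sum_i x i *: U i) =
  \sum_i (x i * (expR (lam i * t))%:C) *: U i.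
Proof.
rewrite /expsup.
have E : series (fun n => (t ^+ n / (n`!)%:R)%:C *: iter n L (\sum_i x i *: U i)) =
  (fun N => \sum_i (x i * (series (exp_coeff (lam i * t)) N)%:C) *: U i).
  apply/funext => N; rewrite /series /=.
  under eq_bigr => n _ do rewrite iterL scaler_sumr.
  rewrite exchange_big /=; apply: eq_bigr => i _.
  rewrite rmorph_sum mulr_sumr scaler_suml; apply: eq_bigr => n _.
  rewrite scalerA /exp_coeff /= exprMn; congr (_ *: _).
  rewrite !rmorphM !rmorphXn /=; ring.
rewrite E.
have H : (fun N => (\sum_i (x i * (series (exp_coeff (lam i * t)) N)%:C) *: U i : 'M[Cn R]_d)) @ \oo
   --> (\sum_i (x i * (expR (lam i * t))%:C) *: U i : 'M[Cn R]_d).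
  apply: (cvg_big add_continuous) => i _.
  apply: cvgZl; apply: cvgMr; apply: cvg_rc.
  have := is_cvg_series_exp_coeff (lam i * t).
  by rewrite expRE /pseries -exp_coeffE.
exact: cvg_lim H.
Qed.

End Exp.
Local Open Scope complex_scope.
Lemma normC_real (R : realType) (z : R[i]) : `|z| = (complex.Re `|z|)%:C.
Proof. by rewrite normc_def. Qed.

Lemma Re_norm_ge0 (R : realType) (z : R[i]) : 0 <= complex.Re `|z|.
Proof. by rewrite normc_def /= sqrtr_ge0. Qed.

Lemma Re_norm_sq (R : realType) (z : R[i]) : ((complex.Re `|z|) ^+ 2)%:C = z * z^*%C.
Proof. by rewrite rmorphXn /= -normC_real sqr_normc. Qed.

Lemma Re_le_norm (R : realType) (z : R[i]) : ((complex.Re z)%:C : R[i]) <= `|z|.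
Proof.
apply: le_trans (normc_ge_Re z); rewrite lecR; exact: real_ler_norm (num_real _).
Qed.

Lemma conjc_real' (R : realType) (r : R) : (r%:C)^*%C = r%:C :> R[i].
Proof. by rewrite /conjc /= oppr0. Qed.

Lemma conj_norm (R : realType) (z : R[i]) : (`|z|)^*%C = `|z|.
Proof. by rewrite normC_real conjc_real'. Qed.

Lemma lpG_E (R : realType) (G : finZmodType) (p : nat) (f : G -> R[i]) :
  (0 < p)%N ->
  lpG p%:R f = ((#|G|%:R)^-1 * \sum_g (complex.Re `|f g|) ^+ p) `^ (p%:R^-1).
Proof.
move=> p0; rewrite /lpG; congr ((_ * _) `^ _).
by apply: eq_bigr => g _; rewrite powR_mulrn // Re_norm_ge0.
Qed.

Section Final.
Variables (R : realType) (d : nat) (G : finZmodType).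
Variables (L : {linear 'M[R[i]]_d -> 'M[R[i]]_d}) (U : G -> 'M[R[i]]_d) (lam : G -> R)
  (chi : G -> G -> R[i]).
Hypothesis HG : #|G| = (d ^ 2)%N.
Hypothesis HU : almost_commuting_unitary_basis U.
Hypothesis HL : forall i, L (U i) = real_complex R (lam i) *: U i.
Hypothesis Hchi : character_iso chi.
Local Notation C := R[i].
Local Open Scope complex_scope.

Lemma Pt_FF t (a : G -> C) :
  Pt chi lam t (FF R G chi a) = FF R G chi (fun i => (expR (lam i * t))%:C * a i).
Proof.
apply/funext => h; rewrite /Pt /FF; apply: eq_bigr => i _.
by rewrite (@fhat_FF R G chi Hchi).
Qed.

Lemma key (X : 'M[C]_d) (t : R) : X != 0 ->
  exists f : G -> C, (exists g, f g != 0) /\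
    nrm4 (expsup L t X) / nrm2 X <= lpG 4 (Pt chi lam t f) / lpG 2 f.
Proof.
move=> X0.
have dpos : (0 < d)%N := d_gt0 d G HG.
have d0 : (0 : R) < d%:R by rewrite ltr0n.
have nR0 : (0 : R) < #|G|%:R by rewrite ltr0n; apply/card_gt0P; exists 0.
case: (complete R d G U HU HG X) => x EX.
pose e i := expR (lam i * t).
pose a : G -> C := fun i => `|x i|.
pose y : G -> C := fun i => x i * (e i)%:C.
pose b : G -> C := fun i => (e i)%:C * a i.
have Eb i : b i = `|y i|.
  rewrite /b /y normrM mulrC; congr (_ * _).
  by rewrite ger0_norm // ler0c expR_ge0.
have bc i : (b i)^* = b i by rewrite Eb conj_norm.
pose s2 := \sum_i (complex.Re `|x i|) ^+ 2.
have Hs2C : s2%:C = \sum_i (x i)^* * x i.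
  rewrite rmorph_sum; apply: eq_bigr => i _; by rewrite mulrC -Re_norm_sq.
have s2ge0 : 0 <= s2 by apply: sumr_ge0 => i _; rewrite exprn_ge0 // Re_norm_ge0.
have s2pos : 0 < s2.
  rewrite lt_def s2ge0 andbT; apply/eqP => /psumr_eq0P H.
  move/eqP: X0; apply; rewrite EX; apply: big1 => i _.
  have := H (fun j _ => exprn_ge0 _ (Re_norm_ge0 R (x j))) i isT.
  move/eqP; rewrite expf_eq0 /= => /eqP /ComplexField.Normc.eq0_normc ->; by rewrite scale0r.
have Hn2 : nrm2 X = s2 `^ 2^-1.
  rewrite /nrm2 EX (@tr2 R d G U HU) -Hs2C.
  have -> : (d%:R : C) * s2%:C = (d%:R * s2)%:C by rewrite rmorphM rmorph_nat.
  rewrite /= powRM ?ler0n // mulrA powRN mulVf ?mul1r ?div1r //.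
  by rewrite gt_eqF // powR_gt0.
pose f := FF R G chi a.
have Haa : \sum_i a i * (a i)^* = s2%:C.
  rewrite Hs2C; apply: eq_bigr => i _.
  by rewrite /a -sqr_normc normr_id sqr_normc mulrC.
have Hf2 : \sum_h f h * (f h)^* = (#|G|%:R * s2)%:C.
  by rewrite (@P2 R G chi Hchi) Haa rmorphM rmorph_nat.
have Hl2 : lpG 2 f = s2 `^ 2^-1.
  rewrite (lpG_E R G 2 f) //.
  have H : \sum_g ((complex.Re `|f g|) ^+ 2)%:C = (#|G|%:R * s2)%:C :> C.
    by under eq_bigr do rewrite Re_norm_sq; exact: Hf2.
  rewrite -rmorph_sum in H; move/complexI: H => ->.
  by rewrite mulrA mulVf ?mul1r // gt_eqF.
have Hf0 : exists g, f g != 0.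
  apply: contrapT => H0.
  have Hz g : f g = 0.
    by have [//|ne] := eqVneq (f g) 0; exfalso; apply: H0; exists g.
  move: Hf2; under eq_bigr do rewrite Hz mul0r.
  rewrite big1 // => /esym /eqP; rewrite -(rmorph0 (real_complex R)) => /eqP/complexI/eqP.
  by rewrite mulf_eq0 !gt_eqF.
exists f; split => //.
have EY : expsup L t X = \sum_i y i *: U i by rewrite EX (expsupE R d G U L lam HL).
rewrite EY Hn2 Hl2 /f Pt_FF.
apply: ler_wpM2r; first by rewrite invr_ge0 powR_ge0.
rewrite (lpG_E R G 4 _) // /nrm4.
set Q := complex.Re _.
set S4 := \sum_g _.
have HQ0 : 0 <= Q.
  have Ehc (Y : 'M[C]_d) : hc (hc Y *m Y) = hc Y *m Y by rewrite hcM hcK.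
  by rewrite /Q -{1}(Ehc (\sum_i y i *: U i)); apply/Re_ge0/tr_hc_ge0.
have HQ := le_trans (Re_le_norm R _) (@tr4 R d G U HU y).
rewrite -/Q in HQ.
have HS4a : S4%:C = \sum_h (FF R G chi b h * (FF R G chi b h)^*) ^+ 2.
  apply/esym; rewrite /S4 rmorph_sum; apply: eq_bigr => h _.
  by rewrite -Re_norm_sq -rmorphXn -exprM.
rewrite (@P4 R G chi Hchi b) in HS4a.
have HS4 : S4%:C = #|G|%:R * \sum_i \sum_j \sum_k \sum_l
    (- i + j + (- k + l) == 0)%:R * (`|y i| * `|y j| * (`|y k| * `|y l|)).
  rewrite HS4a; congr (_ * _); apply: eq_bigr => i _; apply: eq_bigr => j _.
  apply: eq_bigr => k _; apply: eq_bigr => l _.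
  rewrite !bc !Eb; congr (_%:R * _).
  by rewrite -oppr_eq0 !opprD !opprK.
have HS0 : 0 <= S4 by apply: sumr_ge0 => h _; rewrite exprn_ge0 // Re_norm_ge0.
pose M := #|G|%:R^-1 * S4.
have M0 : 0 <= M by rewrite mulr_ge0 // invr_ge0 ltW.
have HQM : Q <= d%:R * M.
  rewrite -lecR; apply: (le_trans HQ).
  by rewrite /M !rmorphM /= fmorphV /= !rmorph_nat HS4 (mulrA (_^-1)) mulVf ?mul1r ?n_neq0.
rewrite -/M.
rewrite !div1r.
apply: (le_trans (y := d%:R `^ (- 4^-1) * (d%:R * M) `^ 4^-1)).
  apply: ler_wpM2l; first exact: powR_ge0.
  apply: ge0_ler_powR => //; rewrite ?nnegrE //; exact: mulr_ge0 (ler0n _ _) M0.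
rewrite powRM ?ler0n // mulrA powRN mulVf ?mul1r //.
by rewrite gt_eqF // powR_gt0.
Qed.

End Final.
Local Close Scope complex_scope.

Theorem mainTheorem19 (R : realType) (d : nat) (G : finZmodType)
    (L : {linear 'M[R[i]]_d -> 'M[R[i]]_d})
    (U : G -> 'M[R[i]]_d) (lam : G -> R) (chi : G -> G -> R[i]) :
  #|G| = (d ^ 2)%N ->
  liouvillian L -> unital L -> reversible L ->
  almost_commuting_unitary_basis U ->
  (forall i, L (U i) = real_complex R (lam i) *: U i) ->
  character_iso chi ->
  forall t : R, 0 <= t ->
    (norm24_mx (expsup L t) <= norm24_fun (Pt chi lam t))%E.
Proof.
move=> HG _ _ _ HU HL Hchi t _.
rewrite /norm24_mx; apply: ge_ereal_sup => _ [X HX <-].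
have [f [Hf0 Hle]] := @key R d G L U lam chi HG HU HL Hchi X t HX.
apply: (le_trans (y := (lpG 4 (Pt chi lam t f) / lpG 2 f)%:E)).
  by rewrite lee_fin.
by apply: ereal_sup_ubound; exists f.
Qed.
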